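(* Let $p$ be an odd prime and $G=\langle a,b : (a[a^p,b])^p,\ b^p\rangle$. Then for every $i\geq1$, $G/\gamma_i(G)\cong (C_p*C_p)/\gamma_i(C_p*C_p)$; that is, $G$ is weakly para-$(C_p*C_p)$.
   Context: Commutator convention: $[x,y]=x^{-1}y^{-1}xy$. $C_p*C_p=\langle a,b:a^p,b^p\rangle$. Lower central series: $\gamma_1(G)=G$, $\gamma_k(G)=[G,\gamma_{k-1}(G)]$. *)

(* Defs.v *)
(* The free group on {a,b} is built as reduced words;
   finitely presented groups F/N and their lower central series are handled via
   subgroups of F (preimages), since MathComp has no infinite group theory. *)
From mathcomp Require Import all_boot.
Set Implicit Arguments. Unset Strict Implicit. Unset Printing Implicit Defensive.

(* A letter (g, e): generator g (false = a, true = b), e = true means inverse. *)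
Definition letter := (bool * bool)%type.
Definition linv (x : letter) : letter := (x.1, ~~ x.2).

Fixpoint reduced (w : seq letter) : bool :=
  match w with
  | x :: ((y :: _) as t) => (y != linv x) && reduced t
  | _ => true
  end.

Definition push (x : letter) (acc : seq letter) : seq letter :=
  match acc with
  | y :: t => if y == linv x then t else x :: acc
  | [::] => [:: x]
  end.

Definition reduce (w : seq letter) : seq letter := foldr push [::] w.

Definition F2 := {w : seq letter | reduced w}.

Definition fg_one : F2 := exist _ [::] isT.
Definition fg_mul (u v : F2) : F2 := insubd fg_one (reduce (val u ++ val v)).
Definition fg_inv (u : F2) : F2 := insubd fg_one (rev (map linv (val u))).
Definition fg_a : F2 := exist _ [:: (false, false)] isT.
Definition fg_b : F2 := exist _ [:: (true, false)] isT.
Definition fg_pow (x : F2) (n : nat) : F2 := iter n (fg_mul x) fg_one.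

Definition fg_comm (x y : F2) : F2 :=
  fg_mul (fg_mul (fg_mul (fg_inv x) (fg_inv y)) x) y.
Definition fg_conj (x g : F2) : F2 := fg_mul (fg_mul (fg_inv g) x) g.

Inductive fg_gen (S : F2 -> Prop) : F2 -> Prop :=
  | fg_gen_base x : S x -> fg_gen S x
  | fg_gen_one : fg_gen S fg_one
  | fg_gen_mul x y : fg_gen S x -> fg_gen S y -> fg_gen S (fg_mul x y)
  | fg_gen_inv x : fg_gen S x -> fg_gen S (fg_inv x).

Definition ncl (rels : seq F2) : F2 -> Prop :=
  fg_gen (fun x => exists r g, r \in rels /\ x = fg_conj r g).

(* For the group Q = F/N (N normal), [lcs_pre N i] is the full preimage in F of
   gamma_i(Q), with gamma_1(Q) = Q and gamma_k(Q) = [Q, gamma_{k-1}(Q)], i.e.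
   the subgroup generated by N and the commutators [g,h], h in gamma_{k-1}. *)
Fixpoint lcs_pre (N : F2 -> Prop) (i : nat) : F2 -> Prop :=
  match i with
  | 0 => fun _ => True
  | k.+1 =>
      match k with
      | 0 => fun _ => True
      | _ => fg_gen (fun x => N x \/ exists g h, lcs_pre N k h /\ x = fg_comm g h)
      end
  end.

(* F/K1 and F/K2 (K1, K2 normal subgroups of F) are isomorphic: there is a map
   f : F -> F inducing a well-defined, injective, multiplicative and surjective
   map F/K1 -> F/K2. *)
Definition quot_iso (K1 K2 : F2 -> Prop) : Prop :=
  exists f : F2 -> F2,
    [/\ forall x y, K1 (fg_mul (fg_inv x) y) <-> K2 (fg_mul (fg_inv (f x)) (f y)),
        forall x y, K2 (fg_mul (fg_inv (f (fg_mul x y))) (fg_mul (f x) (f y))) &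
        forall z, exists x, K2 (fg_mul (fg_inv (f x)) z)].

Definition relG (p : nat) : seq F2 :=
  [:: fg_pow (fg_mul fg_a (fg_comm (fg_pow fg_a p) fg_b)) p; fg_pow fg_b p].
Definition relC (p : nat) : seq F2 := [:: fg_pow fg_a p; fg_pow fg_b p].

(* Main.v *)
Require Import Defs.
From mathcomp Require Import all_boot.
Set Implicit Arguments. Unset Strict Implicit. Unset Printing Implicit Defensive.

Lemma linvK x : linv (linv x) = x.
Proof. by case: x => a b; rewrite /linv /= negbK. Qed.

Lemma reduced_tail x t : reduced (x :: t) -> reduced t.
Proof. by case: t => //= y t /andP[]. Qed.

Lemma push_reduced x w : reduced w -> reduced (push x w).
Proof.
case: w => //= y t H; case: ifP => E; first exact: reduced_tail H.
by rewrite /= E H.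
Qed.

Definition R (u w : seq letter) := foldr push w u.

Lemma R_reduced u w : reduced w -> reduced (R u w).
Proof. by move=> H; elim: u => //= x u IH; apply: push_reduced. Qed.

Lemma reduce_reduced w : reduced (reduce w).
Proof. exact: (@R_reduced w [::]). Qed.

Lemma reduce_id w : reduced w -> reduce w = w.
Proof.
elim: w => //= x t IH H; rewrite IH; last exact: reduced_tail H.
case: t H {IH} => //= y t /andP[H _]; by rewrite (negbTE H).
Qed.

Lemma push_cancel x s : reduced s -> push x (push (linv x) s) = s.
Proof.
case: s => [|z s] /=; first by rewrite eqxx.
rewrite linvK; case: eqP => [->|_] H /=; last by rewrite eqxx.
by case: s H => //= y t /andP[H _]; rewrite (negbTE H).
Qed.

Lemma R_push x r w : reduced w -> R (push x r) w = push x (R r w).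
Proof.
move=> Hw; case: r => //= y t; case: eqP => // ->.
by rewrite push_cancel // R_reduced.
Qed.

Lemma R_reduce u w : reduced w -> R (reduce u) w = R u w.
Proof. by move=> Hw; elim: u => //= x u IH; rewrite R_push // IH. Qed.

Lemma reduce_cat u v : reduce (u ++ v) = R u (reduce v).
Proof. by rewrite /reduce foldr_cat. Qed.

Lemma R_inv u : reduced u -> R (rev (map linv u)) u = [::].
Proof.
elim: u => //= x t IH H.
rewrite rev_cons /R foldr_rcons /= linvK eqxx; apply: IH; exact: reduced_tail H.
Qed.

Definition rr (x y : letter) := y != linv x.
Lemma reducedE s : reduced s = sorted rr s.
Proof. by elim: s => //= x [|y t] //= IH; rewrite IH. Qed.

Lemma reduced_inv u : reduced u -> reduced (rev (map linv u)).
Proof.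
rewrite !reducedE rev_sorted sorted_map.
have E : relpre linv (fun z => rr^~ z) =2 rr.
  move=> a b; rewrite /rr /=; apply/idP/idP; apply: contra => /eqP E.
    by rewrite -E linvK.
  by rewrite E linvK.
by rewrite (eq_sorted E).
Qed.

Lemma valM u v : val (fg_mul u v) = reduce (val u ++ val v).
Proof. by rewrite /fg_mul insubdK // /in_mem /= reduce_reduced. Qed.

Lemma valV u : val (fg_inv u) = rev (map linv (val u)).
Proof. by rewrite /fg_inv insubdK // /in_mem /= reduced_inv // (valP u). Qed.

Lemma mulA x y z : fg_mul x (fg_mul y z) = fg_mul (fg_mul x y) z.
Proof.
apply: val_inj; rewrite !valM !reduce_cat !(reduce_id (valP z)).
rewrite reduce_id; last by apply: R_reduced; exact: (valP z).
by rewrite -reduce_cat R_reduce ?(valP z) // /R foldr_cat.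
Qed.

Lemma mul1g x : fg_mul fg_one x = x.
Proof. by apply: val_inj; rewrite valM /= reduce_id // (valP x). Qed.

Lemma mulg1 x : fg_mul x fg_one = x.
Proof. by apply: val_inj; rewrite valM /= cats0 reduce_id // (valP x). Qed.

Lemma mulVg x : fg_mul (fg_inv x) x = fg_one.
Proof.
by apply: val_inj; rewrite valM valV reduce_cat reduce_id ?(valP x) // R_inv // (valP x).
Qed.

Lemma invK x : fg_inv (fg_inv x) = x.
Proof.
apply: val_inj; rewrite !valV map_rev revK -map_comp.
by rewrite (eq_map (g := id)) ?map_id // => l; apply: linvK.
Qed.

Lemma mulgV x : fg_mul x (fg_inv x) = fg_one.
Proof. by rewrite -{1}(invK x) mulVg. Qed.

Lemma mulKg x y : fg_mul (fg_inv x) (fg_mul x y) = y.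
Proof. by rewrite mulA mulVg mul1g. Qed.
Lemma mulKVg x y : fg_mul x (fg_mul (fg_inv x) y) = y.
Proof. by rewrite mulA mulgV mul1g. Qed.
Lemma inv_uniq x y : fg_mul x y = fg_one -> fg_inv x = y.
Proof. by move=> H; rewrite -(mulg1 (fg_inv x)) -H mulKg. Qed.
Lemma invM x y : fg_inv (fg_mul x y) = fg_mul (fg_inv y) (fg_inv x).
Proof. by apply: inv_uniq; rewrite -!mulA mulKVg mulgV. Qed.
Lemma inv1 : fg_inv fg_one = fg_one.
Proof. by apply: inv_uniq; rewrite mul1g. Qed.

Lemma conjg1 x : fg_conj x fg_one = x.
Proof. by rewrite /fg_conj inv1 mul1g mulg1. Qed.
Lemma conj1g g : fg_conj fg_one g = fg_one.
Proof. by rewrite /fg_conj mulg1 mulVg. Qed.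
Lemma conjMg x y g : fg_conj (fg_mul x y) g = fg_mul (fg_conj x g) (fg_conj y g).
Proof. by rewrite /fg_conj -!mulA mulKVg. Qed.
Lemma conjVg x g : fg_conj (fg_inv x) g = fg_inv (fg_conj x g).
Proof. by rewrite /fg_conj !invM invK -!mulA. Qed.
Lemma conjgM x g h : fg_conj (fg_conj x g) h = fg_conj x (fg_mul g h).
Proof. by rewrite /fg_conj invM -!mulA. Qed.
Lemma conj_comm x y g : fg_conj (fg_comm x y) g = fg_comm (fg_conj x g) (fg_conj y g).
Proof. by rewrite /fg_comm !conjMg !conjVg. Qed.
Lemma inv_comm x y : fg_inv (fg_comm x y) = fg_comm y x.
Proof. by rewrite /fg_comm !invM !invK -!mulA. Qed.

Definition subgrp (K : F2 -> Prop) :=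
  [/\ K fg_one, forall x y, K x -> K y -> K (fg_mul x y) & forall x, K x -> K (fg_inv x)].
Definition nrml (K : F2 -> Prop) := forall x g, K x -> K (fg_conj x g).

Lemma gen_subgrp S : subgrp (fg_gen S).
Proof. split; [exact: fg_gen_one | exact: fg_gen_mul | exact: fg_gen_inv]. Qed.

Lemma gen_min S (K : F2 -> Prop) : subgrp K -> (forall x, S x -> K x) ->
  forall x, fg_gen S x -> K x.
Proof. by case=> K1 KM KV HS x; elim=> *; auto. Qed.

Lemma gen_normal S : (forall x g, S x -> fg_gen S (fg_conj x g)) -> nrml (fg_gen S).
Proof.
move=> HS x g; elim=> {x}.
- by move=> x Sx; apply: HS.
- by rewrite conj1g; apply: fg_gen_one.
- by move=> x y _ Hx _ Hy; rewrite conjMg; apply: fg_gen_mul.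
- by move=> x _ Hx; rewrite conjVg; apply: fg_gen_inv.
Qed.

Lemma ncl_normal rels : nrml (ncl rels).
Proof.
apply: gen_normal => x h [r [g [Hr ->]]]; apply: fg_gen_base.
by exists r, (fg_mul g h); rewrite conjgM.
Qed.

Lemma ncl_base rels r : r \in rels -> ncl rels r.
Proof. by move=> Hr; apply: fg_gen_base; exists r, fg_one; rewrite conjg1. Qed.

Lemma lcs_sub N k : nrml N -> subgrp (lcs_pre N k) /\ nrml (lcs_pre N k).
Proof.
move=> HN; elim: k => [|[|k] IH] /=; try by split.
split; first exact: gen_subgrp.
apply: gen_normal => x g [Nx|[a [h [Hh ->]]]]; apply: fg_gen_base.
  by left; apply: HN.
by right; exists (fg_conj a g), (fg_conj h g); split; [apply: IH.2 | rewrite conj_comm].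
Qed.

Lemma lcs_N N k x : N x -> lcs_pre N k x.
Proof. by case: k => [|[|k]] //= Nx; apply: fg_gen_base; left. Qed.

Lemma lcs_one N k : lcs_pre N k fg_one.
Proof. by case: k => [|[|k]] //=; apply: fg_gen_one. Qed.

Lemma lcs_mono (N1 N2 : F2 -> Prop) : (forall k y, N1 y -> lcs_pre N2 k y) ->
  forall k y, lcs_pre N1 k y -> lcs_pre N2 k y.
Proof.
move=> H; elim=> [|[|k] IH] //= y; apply: gen_min; first exact: gen_subgrp.
move=> x [N1x|[a [h [Hh ->]]]]; first exact: (H k.+2).
by apply: fg_gen_base; right; exists a, h; split => //; apply: IH.
Qed.

Lemma powmod (K : F2 -> Prop) u v n : subgrp K -> nrml K ->
  K (fg_mul u (fg_inv v)) -> K (fg_mul (fg_pow u n) (fg_inv (fg_pow v n))).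
Proof.
case=> K1 KM KV KN Huv; elim: n => [|n IH] /=; first by rewrite inv1 mulg1.
have -> : fg_mul (fg_mul u (fg_pow u n)) (fg_inv (fg_mul v (fg_pow v n))) =
  fg_mul (fg_conj (fg_mul (fg_pow u n) (fg_inv (fg_pow v n))) (fg_inv u))
         (fg_mul u (fg_inv v)).
  by rewrite /fg_conj invK !invM -!mulA mulKg.
by apply: KM => //; apply: KN.
Qed.

Lemma key (K : F2 -> Prop) p : subgrp K -> nrml K ->
  K (fg_comm (fg_pow fg_a p) fg_b) ->
  (K (fg_pow (fg_mul fg_a (fg_comm (fg_pow fg_a p) fg_b)) p) <-> K (fg_pow fg_a p)).
Proof.
move=> HK KN Hc; case: (HK) => K1 KM KV.
set c := fg_comm _ _; set A := fg_pow fg_a p; set x := fg_mul fg_a c.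
have Hc' : K (fg_mul x (fg_inv fg_a)).
  by have := KN _ (fg_inv fg_a) Hc; rewrite /fg_conj invK.
have H := powmod p HK KN Hc'; fold A in H.
split=> Hx.
  have := KV _ (KM _ _ (KV _ Hx) H); by rewrite mulKg invK.
have := KM _ _ H Hx; by rewrite -mulA mulVg mulg1.
Qed.

Theorem mainTheorem12 (p : nat) (hp : prime p) (hodd : odd p) (i : nat) (hi : 1 <= i) :
  quot_iso (lcs_pre (ncl (relG p)) i) (lcs_pre (ncl (relC p)) i).
Proof.
set NG := ncl (relG p); set NC := ncl (relC p).
have NGn : nrml NG by apply: ncl_normal.
have NCn : nrml NC by apply: ncl_normal.
set A := fg_pow fg_a p.
have rG1 : NG (fg_pow (fg_mul fg_a (fg_comm A fg_b)) p).
  by apply: ncl_base; rewrite inE eqxx.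
have rG2 : NG (fg_pow fg_b p) by apply: ncl_base; rewrite !inE eqxx orbT.
have rC1 : NC A by apply: ncl_base; rewrite inE eqxx.
have rC2 : NC (fg_pow fg_b p) by apply: ncl_base; rewrite !inE eqxx orbT.
have C1 : forall k, lcs_pre NG k A.
  elim=> [|[|k] IH] //.
  have [HK KN] := lcs_sub k.+2 NGn.
  apply/(key HK KN); last exact: lcs_N.
  rewrite -(invK (fg_comm _ _)) inv_comm; case: HK => _ _ KV; apply: KV.
  by apply: fg_gen_base; right; exists fg_b, A.
have C2 : forall k y, NC y -> lcs_pre NG k y.
  move=> k; have [HK KN] := lcs_sub k NGn.
  apply: gen_min => // x [r [g [Hr ->]]]; apply: KN.
  move: Hr; rewrite !inE => /orP[/eqP->|/eqP->]; first exact: C1.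
  exact: lcs_N.
have C3 : forall k y, NG y -> lcs_pre NC k y.
  move=> k; have [HK KN] := lcs_sub k NCn.
  apply: gen_min => // x [r [g [Hr ->]]]; apply: KN.
  move: Hr; rewrite !inE => /orP[/eqP->|/eqP->]; last exact: lcs_N.
  have [HC NCn'] := lcs_sub 1 NCn.
  apply: lcs_N; have HNC : subgrp NC by apply: gen_subgrp.
  apply/(key HNC NCn) => //.
  rewrite /fg_comm -!mulA; case: HNC => _ KM KV; apply: KM; first exact: KV.
  rewrite !mulA; exact: NCn.
have E : forall y, lcs_pre NG i y <-> lcs_pre NC i y.
  move=> y; split; [exact: lcs_mono | exact: lcs_mono].
exists (fun x => x); split.
- by move=> x y; apply: E.
- by move=> x y; rewrite mulVg; apply: lcs_one.
- by move=> z; exists z; rewrite mulVg; apply: lcs_one.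
Qed.
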